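(* In the Bernoulli setting with $\mathscr{A}_{\mathrm{sing}},\mathscr{A}_{\mathrm{inv}}$ both nonempty, let $\eta$ be the unique $\mathcal{Q}$-stationary probability measure on $\mathbb{P}^1$. Then $p\times\eta$ is $\bar{\mathcal{Q}}$-stationary and $\bar{\mathcal{Q}}$ is uniformly ergodic: there exist constants $c>0$, $C<\infty$ such that $$\Big\|\bar{\mathcal{Q}}^n\varphi-\int\varphi\,d(p\times\eta)\Big\|_\infty\le Ce^{-cn}\|\varphi\|_\infty\quad\forall n\in\mathbb{N},\ \forall\varphi\in L^\infty(\mathscr{A}\times\mathbb{P}^1).$$ In particular $p\times\eta$ is the unique $\bar{\mathcal{Q}}$-stationary measure.
   Context: $\mathscr{A}=\{1,\dots,k\}=\mathscr{A}_{\mathrm{sing}}\sqcup\mathscr{A}_{\mathrm{inv}}$ both nonempty, $p$ a probability vector with all $p_i>0$, $\underline A=(A_i)$ with $\mathrm{rank}A_i=1$ for $i\in\mathscr{A}_{\mathrm{sing}}$ and $A_i$ invertible for $i\in\mathscr{A}_{\mathrm{inv}}$. Projective action: $\hat A\hat v=\widehat{Av}$ (invertible), constant map to $\widehat{\mathrm{Range}A}$ (rank one). $\mathcal{Q}\psi(\hat v)=\sum_ip_i\psi(\hat A_i\hat v)$ on $L^\infty(\mathbb{P}^1)$; $\bar{\mathcal{Q}}\varphi(j,\hat v)=\sum_ip_i\varphi(i,\hat A_j\hat v)$ on $L^\infty(\mathscr{A}\times\mathbb{P}^1)$. A measure $\nu$ is stationary for an operator $T$ if $\int T\varphi\,d\nu=\int\varphi\,d\nu$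 for all bounded measurable $\varphi$. *)

(* Defs.v *)
From HB Require Import structures.
From mathcomp Require Import all_boot all_order all_algebra.
From mathcomp Require Import all_classical all_reals all_analysis.
Set Implicit Arguments. Unset Strict Implicit. Unset Printing Implicit Defensive.
Import Order.TTheory GRing.Theory Num.Theory.
Import numFieldNormedType.Exports.
Local Open Scope classical_set_scope.
Local Open Scope ring_scope.

Section P1.
Variable R : realType.

(* canonical representatives of lines in R^2: unit vectors in the upper
   half-plane (including the positive x-axis, excluding the negative one) *)
Definition p1pred (w : R * R) : bool :=
  (w.1 ^+ 2 + w.2 ^+ 2 == 1) && ((0 < w.2) || ((w.2 == 0) && (0 < w.1))).

Definition P1sig := {w : R * R | p1pred w}.

Lemma p1pred_e1 : p1pred (1, 0).
Proof. by rewrite /p1pred /= expr1n expr0n addr0 eqxx ltr01 eqxx orbT. Qed.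

Definition p1pt : P1sig := exist _ (1, 0) p1pred_e1.

HB.instance Definition _ := Choice.on P1sig.
HB.instance Definition _ := isPointed.Build P1sig p1pt.

Definition P1val (v : P1sig) : R * R := sval v.

Definition P1 := @g_sigma_algebra_preimageType _ P1sig (R * R)%type P1val.

Definition apply2 (M : 'M[R]_2) (w : R * R) : R * R :=
  (M ord0 ord0 * w.1 + M ord0 ord_max * w.2,
   M ord_max ord0 * w.1 + M ord_max ord_max * w.2).

Definition dir (w : R * R) : P1 :=
  let n := Num.sqrt (w.1 ^+ 2 + w.2 ^+ 2) in
  let u := (w.1 / n, w.2 / n) in
  insubd p1pt (if (0 < u.2) || ((u.2 == 0) && (0 < u.1)) then u else (- u.1, - u.2)).

(* the direction of the range of a rank-one matrix: a nonzero column *)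
Definition range_dir (M : 'M[R]_2) : P1 :=
  dir (if (M ord0 ord0, M ord_max ord0) != (0, 0)
       then (M ord0 ord0, M ord_max ord0) else (M ord0 ord_max, M ord_max ord_max)).

Definition pact (M : 'M[R]_2) (v : P1) : P1 :=
  if M \in unitmx then dir (apply2 M (P1val v)) else range_dir M.

End P1.

Definition Alph (k : nat) := 'I_k.+1.
HB.instance Definition _ k := Choice.on (Alph k).
HB.instance Definition _ k := isPointed.Build (Alph k) ord0.
HB.instance Definition _ k := @isMeasurable.Build default_measure_display
  (Alph k) discrete_measurable discrete_measurable0
  discrete_measurableC discrete_measurableU.

Section Ops.
Variables (R : realType) (k : nat) (A : Alph k -> 'M[R]_2) (p : Alph k -> R).

Definition Qop (psi : P1 R -> R) : P1 R -> R :=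
  fun v => \sum_(i : 'I_k.+1) p i * psi (pact (A i) v).

Definition Qbar (phi : Alph k * P1 R -> R) : Alph k * P1 R -> R :=
  fun x => \sum_(i : 'I_k.+1) p i * phi (i, pact (A x.1) x.2).

End Ops.

Definition bounded_fun (T : Type) (R : realType) (f : T -> R) :=
  exists M : R, forall x, `|f x| <= M.

Definition stationary d (T : measurableType d) (R : realType)
  (Top : (T -> R) -> T -> R) (nu : {measure set T -> \bar R}) :=
  forall phi : T -> R, measurable_fun setT phi -> bounded_fun phi ->
    (\int[nu]_x (Top phi x)%:E = \int[nu]_x (phi x)%:E)%E.

(* Main.v *)
Require Import Defs.
From HB Require Import structures.
From mathcomp Require Import all_boot all_order all_algebra.
From mathcomp Require Import all_classical all_reals all_analysis.
From mathcomp Require Import ring lra.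
Import Order.TTheory GRing.Theory Num.Theory.
Import numFieldNormedType.Exports.
Local Open Scope classical_set_scope.
Local Open Scope ring_scope.

Section Meas.
Variable R : realType.

Lemma inv_measurable : measurable_fun setT (@GRing.inv R).
Proof.
have -> : [set: R] = [set 0] `|` ~` [set 0] by rewrite setUv.
apply/measurable_funU => //; first exact: measurableC.
split; first exact: measurable_fun_set1.
apply: measurable_realfun.open_continuous_measurable_fun.
  apply: closed_openC; apply: accessible_closed_set1; apply: hausdorff_accessible; exact: Rhausdorff.
move=> x /set_mem /= x0; apply: inv_continuous; exact/eqP.
Qed.

Lemma P1val_measurable : measurable_fun setT (@P1val R : P1 R -> (R * R)%type).
Proof. by move=> _ B mB; exists B. Qed.

Lemma into_P1_measurable d (T : measurableType d) (f : T -> P1 R) :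
  measurable_fun setT (@P1val R \o f) -> measurable_fun setT f.
Proof.
move=> mf _ A [B mB <-]; rewrite setTI [X in measurable X](_ : _ = setT `&` (@P1val R \o f) @^-1` B)//; exact: mf.
Qed.


Let RR := (R * R)%type.

Lemma cond_measurable :
  measurable_fun setT (fun u : RR => (0 < u.2) || ((u.2 == 0) && (0 < u.1))).
Proof.
apply: measurable_or.
  exact: measurable_realfun.measurable_fun_ltr (measurable_cst _) measurable_snd.
apply: measurable_and.
  exact: measurable_realfun.measurable_fun_eqr measurable_snd (measurable_cst _).
exact: measurable_realfun.measurable_fun_ltr (measurable_cst _) measurable_fst.
Qed.

Lemma sq_measurable : measurable_fun setT (fun w : RR => w.1 ^+ 2 + w.2 ^+ 2).
Proof.
apply: measurable_realfun.measurable_funD; apply: measurable_realfun.measurable_funX; [exact: measurable_fst|exact: measurable_snd].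
Qed.

Lemma p1pred_measurable : measurable_fun setT (@p1pred R).
Proof.
apply: measurable_and; last exact: cond_measurable.
exact: measurable_realfun.measurable_fun_eqr sq_measurable (measurable_cst _).
Qed.

Lemma dir_measurable : measurable_fun setT (@dir R).
Proof.
apply: into_P1_measurable.
set n := fun w : RR => Num.sqrt (w.1 ^+ 2 + w.2 ^+ 2).
set u := fun w : RR => (w.1 / n w, w.2 / n w).
set c := fun u : RR => (0 < u.2) || ((u.2 == 0) && (0 < u.1)).
set U := fun w => if c (u w) then u w else (- (u w).1, - (u w).2).
have -> : @P1val R \o @dir R = fun w => if p1pred (U w) then U w else (1, 0).
  by apply/funext => w; rewrite /= /P1val /dir -/n -/u -/c -/U val_insubd.
have mn : measurable_fun setT (fun w => (n w)^-1).
  apply: (measurableT_comp (inv_measurable)).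
  apply: (measurableT_comp (measurable_realfun.continuous_measurable_fun (@sqrt_continuous R))).
  exact: sq_measurable.
have mu : measurable_fun setT u.
  apply: measurable_fun_pair; apply: measurable_realfun.measurable_funM => //;
    try exact: measurable_fst; try exact: measurable_snd.
have mU : measurable_fun setT U.
  apply: measurable_fun_ifT => //.
    exact: (measurableT_comp cond_measurable).
  apply: measurable_fun_pair.
    apply: measurableT_comp => //; exact: (measurableT_comp measurable_fst).
  apply: measurableT_comp => //; exact: (measurableT_comp measurable_snd).
apply: measurable_fun_ifT => //.
exact: (measurableT_comp p1pred_measurable).
Qed.

Lemma apply2_measurable (M : 'M[R]_2) : measurable_fun setT (@apply2 R M).
Proof.
apply: measurable_fun_pair; apply: measurable_realfun.measurable_funD; apply: measurable_realfun.measurable_funM => //;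
  (exact: measurable_fst || exact: measurable_snd).
Qed.

Lemma pact_measurable (M : 'M[R]_2) : measurable_fun setT (@pact R M).
Proof.
rewrite /pact; case: (M \in unitmx) => //.
apply: (measurableT_comp dir_measurable).
apply: (measurableT_comp (apply2_measurable M)).
exact: P1val_measurable.
Qed.

End Meas.

Section Int.
Variable R : realType.
Local Open Scope ereal_scope.

Lemma int_bdd d (T : measurableType d) (mu : probability T R) (f : T -> R) M :
  measurable_fun setT f -> (forall x, (`|f x| <= M)%R) ->
  mu.-integrable setT (EFin \o f).
Proof.
move=> mf fM.
apply: (le_integrable measurableT _ _ (finite_measure_integrable_cst mu M measurableT)).
  exact/measurable_realfun.measurable_EFinP.
move=> x _ /=; rewrite lee_fin (le_trans (fM x))//.
exact: ler_norm.
Qed.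

Arguments int_bdd {d T} mu {f} M.

Lemma int_close d (T : measurableType d) (mu : probability T R) (f : T -> R) M
    (a B : R) :
  measurable_fun setT f -> (forall x, (`|f x| <= M)%R) ->
  (forall x, (`|a - f x| <= B)%R) ->
  `| a%:E - \int[mu]_x (f x)%:E | <= B%:E.
Proof.
move=> mf fM aB.
have h1 : mu [set: T] = 1 by exact: probability_setT.
have ia := finite_measure_integrable_cst mu a measurableT.
have if_ := int_bdd mu M mf fM.
have -> : a%:E = \int[mu]_x (cst a x)%:E.
  rewrite (integral_cst mu measurableT a%:E); rewrite -[LHS]mule1; congr (_ * _); exact/esym/h1.
rewrite -(integralB_EFin measurableT ia if_).
apply: (le_trans (le_abse_integral _ _ _)) => //.
  apply/measurable_realfun.measurable_EFinP.
  exact: measurable_realfun.measurable_funB.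
under eq_integral do rewrite -EFinB abse_EFin.
apply: le_trans.
  apply: (@ge0_le_integral _ _ _ mu setT measurableT _ (fun _ => B%:E)) => //.
  - apply/measurable_realfun.measurable_EFinP; apply: measurableT_comp => //.
    exact: measurable_realfun.measurable_funB.
  - by move=> x _; rewrite lee_fin aB.
rewrite (integral_cst mu measurableT B%:E) -[leRHS]mule1; rewrite le_eqVlt; apply/orP; left; apply/eqP; congr (_ * _); exact: h1.
Qed.

Lemma int_discrete k (P : probability (Alph k) R) (p : Alph k -> R)
    (hP : forall i, P [set i] = (p i)%:E) (h : Alph k -> R) :
  \int[P]_x (h x)%:E = (\sum_(i : Alph k) p i * h i)%:E.
Proof.
have mall : forall (f : Alph k -> R), measurable_fun setT f.
  by move=> f _ B _.
have -> : (fun x => (h x)%:E) =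
    (fun x => \sum_(i : Alph k) ((h i)%:E * (\1_[set i] x)%:E)).
  apply/funext => x; rewrite (bigD1 x) //= big1 ?adde0.
    by rewrite indicE mem_set // mule1.
  by move=> i /negbTE ix; rewrite indicE memNset ?mule0// => /= xi; rewrite xi eqxx in ix.
rewrite integral_sum //; last first.
  move=> i; apply: (int_bdd P `|h i|%R).
    exact: mall.
  move=> x; rewrite normrM indicE; case: (x \in _); rewrite ?normr1 ?normr0 ?mulr1 ?mulr0 //.
rewrite -sumEFin; apply: eq_bigr => i _.
rewrite integralZl //; last first.
  apply: (int_bdd P 1%R); first exact: mall.
  by move=> x; rewrite indicE; case: (x \in _); rewrite ?normr1 ?normr0.
rewrite integral_indic // setIT.
by transitivity ((h i)%:E * (p i)%:E); [congr (_ * _); exact: hP|rewrite -EFinM mulrC].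
Qed.


Lemma prod_setT k (P : probability (Alph k) R) (eta : probability (P1 R) R) :
  (P \x eta) setT = 1.
Proof.
rewrite -setXTT product_measure1E //.
have h1 : P [set: Alph k] = 1 by exact: probability_setT.
have h2 : eta [set: P1 R] = 1 by exact: probability_setT.
by transitivity (1 * 1 : \bar R); [congr (_ * _)|rewrite mule1].
Qed.

Lemma fub k (P : probability (Alph k) R) (p : Alph k -> R)
    (hP : forall i, P [set i] = (p i)%:E) (eta : probability (P1 R) R)
    (f : (Alph k * P1 R)%type -> R) M :
  measurable_fun setT f -> (forall x, (`|f x| <= M)%R) ->
  \int[P \x eta]_z (f z)%:E = \int[eta]_y (\sum_(i : Alph k) p i * f (i, y))%:E.
Proof.
move=> mf fM.
have iP : (P \x eta).-integrable setT (EFin \o f).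
  apply: (le_integrable measurableT (g := EFin \o cst M)).
  - exact/measurable_realfun.measurable_EFinP.
  - move=> x _ /=; rewrite lee_fin (le_trans (fM x))//; exact: ler_norm.
  apply/integrableP; split; first exact/measurable_realfun.measurable_EFinP.
  rewrite (_ : (fun x => _) = cst (`|M|%R%:E)); last first.
    by apply/funext => x /=.
  rewrite (integral_cst (P \x eta) measurableT) [X in _ * X](_ : _ = 1); last exact: prod_setT.
  by rewrite mule1 ltry.
rewrite -(integral21_prod_meas1 iP).
apply: eq_integral => y _; rewrite /fubini_G /=.
exact: int_discrete.
Qed.

End Int.
Arguments fub {R k P p} hP eta {f M}.
Arguments int_close {R d T} mu {f} M {a B}.
Arguments int_bdd {R d T} mu {f} M.

Section Ops2.
Variables (R : realType) (k : nat) (A : Alph k -> 'M[R]_2) (p : Alph k -> R).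
Hypothesis p0 : forall i, 0 <= p i.
Hypothesis p1 : \sum_(i : Alph k) p i = 1.

Lemma split_meas (F : Alph k -> P1 R -> R) :
  (forall j, measurable_fun setT (F j)) ->
  measurable_fun setT (fun x : (Alph k * P1 R)%type => F x.1 x.2).
Proof.
move=> mF.
have -> : (fun x : (Alph k * P1 R)%type => F x.1 x.2) =
    (fun x => \sum_(j : Alph k) ((x.1 == j)%:R * F j x.2)).
  apply/funext => x; rewrite (bigD1 x.1) //= eqxx mul1r big1 ?addr0 //.
  by move=> j; rewrite eq_sym => /negbTE ->; rewrite mul0r.
apply: measurable_fun_approximation.measurable_sum => j.
apply: measurable_realfun.measurable_funM.
  have mA : measurable_fun setT (fun a : Alph k => (a == j)%:R : R) by move=> _ B _.
  exact: (measurableT_comp mA measurable_fst).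
exact: (measurableT_comp (mF j) measurable_snd).
Qed.

Lemma avg_bdd (h : Alph k -> R) M : (forall i, `|h i| <= M) ->
  `|\sum_(i : Alph k) p i * h i| <= M.
Proof.
move=> hM; apply: (le_trans (ler_norm_sum _ _ _)).
apply: (@le_trans _ _ (\sum_(i : Alph k) p i * M)).
  apply: ler_sum => i _; rewrite normrM ger0_norm //; exact: ler_wpM2l.
by rewrite -mulr_suml p1 mul1r.
Qed.

Lemma Qop_meas (h : P1 R -> R) : measurable_fun setT h -> measurable_fun setT (Qop A p h).
Proof.
move=> mh; apply: measurable_fun_approximation.measurable_sum => i.
apply: measurable_realfun.measurable_funM => //.
exact: (measurableT_comp mh (pact_measurable _ _)).
Qed.

Lemma Qop_bdd (h : P1 R -> R) (M : R) : (forall x, `|h x| <= M) -> forall x, `|Qop A p h x| <= M.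
Proof. by move=> hM x; apply: avg_bdd => i. Qed.

Lemma Qbar_meas (phi : (Alph k * P1 R)%type -> R) : measurable_fun setT phi -> measurable_fun setT (Qbar A p phi).
Proof.
move=> mphi.
apply: (split_meas (fun j v => \sum_(i : Alph k) p i * phi (i, pact (A j) v))) => j.
apply: measurable_fun_approximation.measurable_sum => i.
apply: measurable_realfun.measurable_funM => //.
apply: (measurableT_comp mphi).
apply: measurable_fun_pair => //.
exact: pact_measurable.
Qed.

Lemma Qbar_bdd (phi : (Alph k * P1 R)%type -> R) (M : R) : (forall x, `|phi x| <= M) -> forall x, `|Qbar A p phi x| <= M.
Proof. by move=> hM x; apply: avg_bdd => i. Qed.

Lemma iter_Qop_mb (n : nat) (h : P1 R -> R) (M : R) : measurable_fun setT h -> (forall x, `|h x| <= M) ->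
  measurable_fun setT (iter n (Qop A p) h) /\
  forall x, `|iter n (Qop A p) h x| <= M.
Proof.
move=> mh hM; elim: n => [|n [IH1 IH2]] //=.
by split; [exact: Qop_meas|exact: Qop_bdd].
Qed.

Lemma iter_Qbar_mb (n : nat) (h : (Alph k * P1 R)%type -> R) (M : R) : measurable_fun setT h -> (forall x, `|h x| <= M) ->
  measurable_fun setT (iter n (Qbar A p) h) /\
  forall x, `|iter n (Qbar A p) h x| <= M.
Proof.
move=> mh hM; elim: n => [|n [IH1 IH2]] //=.
by split; [exact: Qbar_meas|exact: Qbar_bdd].
Qed.

Lemma iter_Qbar_formula n phi j v :
  iter n.+1 (Qbar A p) phi (j, v) =
  iter n (Qop A p) (fun w => \sum_(i : Alph k) p i * phi (i, w)) (pact (A j) v).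
Proof.
elim: n j v => [|n IH] j v //=.
rewrite /Qbar /=; rewrite /Qop; apply: eq_bigr => i _.
by rewrite -IH.
Qed.

Definition qq := \sum_(i : Alph k) p i * (A i \in unitmx)%:R.

Lemma contract (n : nat) (h : P1 R -> R) (M : R) : (forall x, `|h x| <= M) ->
  forall u w, `|iter n (Qop A p) h u - iter n (Qop A p) h w| <= 2 * M * qq ^+ n.
Proof.
move=> hM; elim: n => [|n IH] u w /=.
  rewrite expr0 mulr1 mulr2n mulrDl !mul1r; apply: (le_trans (ler_normB _ _)).
  by apply: lerD.
rewrite /Qop -sumrB.
apply: (le_trans (ler_norm_sum _ _ _)).
rewrite /qq exprS mulrCA mulr_suml.
apply: ler_sum => i _; rewrite -mulrBr normrM ger0_norm // -mulrA.
apply: ler_wpM2l => //.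
rewrite /pact; case: (A i \in unitmx).
  by rewrite mul1r.
by rewrite subrr normr0 mul0r.
Qed.

End Ops2.
Arguments iter_Qop_mb {R k A p} p0 p1 n {h M}.
Arguments iter_Qbar_mb {R k A p} p0 p1 n {h M}.
Arguments Qbar_meas {R k A p phi}.
Arguments Qbar_bdd {R k A p} p0 p1 {phi M}.
Arguments contract {R k A p} p0 n {h M}.
Arguments avg_bdd {R k p} p0 p1 {h M}.
Arguments qq {R k} A p.

Section Main.
Variables (R : realType) (k : nat) (A : Alph k -> 'M[R]_2) (p : Alph k -> R)
  (P : probability (Alph k) R) (eta : probability (P1 R) R).
Hypothesis hsing : exists i : Alph k, \rank (A i) = 1%N.
Hypothesis hpos : forall i : Alph k, 0 < p i.
Hypothesis p1 : \sum_(i : Alph k) p i = 1.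
Hypothesis hP : forall i : Alph k, P [set i] = (p i)%:E.
Hypothesis stat : stationary (Qop A p) eta.

Let p0 : forall i, 0 <= p i. Proof. by move=> i; apply: ltW. Qed.

Let gof (phi : (Alph k * P1 R)%type -> R) : P1 R -> R :=
  fun w => \sum_(i : Alph k) p i * phi (i, w).

Let gof_meas phi : measurable_fun setT phi -> measurable_fun setT (gof phi).
Proof.
move=> mphi; apply: measurable_fun_approximation.measurable_sum => i.
apply: measurable_realfun.measurable_funM => //.
apply: (measurableT_comp mphi).
exact: measurable_fun_pair.
Qed.

Let gof_bdd phi M : (forall x, `|phi x| <= M) -> forall w, `|gof phi w| <= M.
Proof. by move=> hM w; exact: (avg_bdd p0 p1). Qed.

Let q := qq A p.

Let q0 : 0 <= q.
Proof. by apply: sumr_ge0 => i _; apply: mulr_ge0. Qed.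

Let q1 : q < 1.
Proof.
have [i0 hi0] := hsing.
have ni0 : (A i0 \in unitmx) = false.
  apply/negP => /mxrank_unit; rewrite hi0 //.
rewrite -subr_gt0 -{1}p1 /q /qq -sumrB.
rewrite (bigD1 i0) //= ni0 mulr0 subr0.
apply: ltr_pwDl => //.
apply: sumr_ge0 => i _; rewrite -{1}(mulr1 (p i)) -mulrBr; apply: mulr_ge0 => //.
by case: (A i \in unitmx); rewrite ?subrr ?subr0.
Qed.

Definition cc := 1 - q.
Definition CC := 2 * expR cc.

Lemma cc_gt0 : 0 < cc.
Proof. by rewrite /cc subr_gt0. Qed.

Let qn (n : nat) : q ^+ n <= expR (- cc * n%:R).
Proof.
elim: n => [|n IH]; first by rewrite mulr0 expR0 expr0.
rewrite exprS -natr1 mulrDr mulr1 expRD mulrC.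
apply: ler_pM => //; first exact: exprn_ge0.
have := expR_ge1Dx (- cc); rewrite /cc opprB addrC subrK => //.
Qed.

Lemma iter_stat (h : P1 R -> R) M (n : nat) :
  measurable_fun setT h -> (forall x, `|h x| <= M) ->
  (\int[eta]_x (iter n (Qop A p) h x)%:E = \int[eta]_x (h x)%:E)%E.
Proof.
move=> mh hM; elim: n => [|n IH] //=.
have [m1 m2] := iter_Qop_mb (A:=A) (p:=p) p0 p1 n mh hM.
rewrite -IH; apply: stat => //; by exists M.
Qed.

Lemma part1 : stationary (Qbar A p) (P \x eta)%E.
Proof.
move=> phi mphi [M hM].
rewrite (fub hP eta (Qbar_meas (A:=A) (p:=p) mphi) (Qbar_bdd (A:=A) p0 p1 hM)).
rewrite (fub hP eta mphi hM).
have bg : Defs.bounded_fun (gof phi).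
  by exists M => w; apply: (avg_bdd p0 p1) => i; exact: hM.
rewrite -(stat (gof phi) (gof_meas _ mphi) bg).
by apply: eq_integral => y _.
Qed.

Lemma part2 (n : nat) (phi : (Alph k * P1 R)%type -> R) :
  measurable_fun setT phi ->
  forall M : R, (forall x, `|phi x| <= M) ->
  forall x, (`| (iter n (Qbar A p) phi x)%:E
                - \int[(P \x eta)%E]_z (phi z)%:E | <=
             (CC * expR (- cc * n%:R) * M)%:E)%E.
Proof.
move=> mphi M hM x.
have M0 : 0 <= M by apply: le_trans (normr_ge0 _) (hM x).
have ec : 1 <= expR cc.
  apply: le_trans (expR_ge1Dx _); rewrite lerDl; exact: ltW cc_gt0.
rewrite (fub hP eta mphi hM).
have mg := gof_meas _ mphi; have bg := gof_bdd _ _ hM.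
case: n => [|m].
  apply: (le_trans (int_close eta M mg bg (a := phi x) (B := 2 * M) _)).
    move=> w; apply: (le_trans (ler_normB _ _)).
    by rewrite mulr2n mulrDl mul1r; apply: lerD.
  rewrite lee_fin mulr0 expR0 mulr1 /CC.
  rewrite -mulrA ler_wpM2l //; rewrite -{1}(mul1r M); exact: ler_wpM2r.
case: x => j v.
rewrite iter_Qbar_formula.
rewrite -(iter_stat _ _ m mg bg).
have [mh bh] := iter_Qop_mb (A:=A) (p:=p) p0 p1 m mg bg.
apply: (le_trans (int_close eta M mh bh (a := iter m (Qop A p) (gof phi) (pact (A j) v))
          (B := 2 * M * q ^+ m) _)).
  by move=> w; apply: (contract (A:=A) p0).
rewrite lee_fin /CC.
have e : expR cc * expR (- cc * m.+1%:R) = expR (- cc * m%:R).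
  by rewrite -expRD; congr expR; rewrite -natr1; ring.
rewrite -[2 * expR cc * _]mulrA e.
have := qn m; nra.
Qed.


Lemma arith (x y w z : R) : 0 < x -> y < z * (w * x) -> x + x * (w * z) <= y -> False.
Proof. move=> *; nra. Qed.

Lemma part3 (nu : probability (Alph k * P1 R)%type R) :
  stationary (Qbar A p) nu ->
  forall S, measurable S -> nu S = (P \x eta)%E S.
Proof.
move=> snu S mS.
pose phi : (Alph k * P1 R)%type -> R := \1_S.
have mphi : measurable_fun setT phi by apply: measurable_realfun.measurable_indic.
have hphi : forall x, `|phi x| <= 1.
  by move=> x; rewrite /phi indicE; case: (x \in S); rewrite ?normr1 ?normr0.
have nuS : nu S = (\int[nu]_x (phi x)%:E)%E by rewrite integral_indic // setIT.
have pS : (P \x eta)%E S = (\int[(P \x eta)%E]_x (phi x)%:E)%E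
  by rewrite integral_indic // setIT.
have fa : nu S \is a fin_num by apply: fin_num_measure.
have fb : (P \x eta)%E S \is a fin_num.
  rewrite ge0_fin_numE ?measure_ge0 //.
  apply: (@le_lt_trans _ _ 1%E); last exact: ltry.
  apply: (le_trans (le_measure (P \x eta)%E (mem_set mS) (mem_set measurableT) (@subsetT _ S))).
  rewrite le_eqVlt; apply/orP; left; apply/eqP; exact: prod_setT.
set a := fine (nu S); set b := fine ((P \x eta)%E S).
have key : forall n : nat, `|a - b| <= CC * expR (- cc * n%:R).
  move=> n.
  have [mi bi] := iter_Qbar_mb (A:=A) (p:=p) p0 p1 n mphi hphi.
  have st : (\int[nu]_x (iter n (Qbar A p) phi x)%:E = \int[nu]_x (phi x)%:E)%E.
    elim: n {mi bi} => [|n IH] //=.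
    have [mi' bi'] := iter_Qbar_mb (A:=A) (p:=p) p0 p1 n mphi hphi.
    rewrite -IH; apply: snu => //; by exists 1.
  have hb : forall x, `|b - iter n (Qbar A p) phi x| <= CC * expR (- cc * n%:R) * 1.
    move=> x; rewrite distrC.
    have := part2 n phi mphi 1 hphi x.
    by rewrite -pS -(fineK fb) -EFinB abse_EFin lee_fin.
  have := int_close nu 1 mi bi hb.
  by rewrite st -nuS -(fineK fa) -EFinB abse_EFin lee_fin mulr1 distrC.
have d0 : `|a - b| = 0.
  apply: le_anti; rewrite normr_ge0 andbT; apply/negPn/negP; rewrite -ltNge => dpos.
  set d := `|a - b| in dpos key.
  have c0 := cc_gt0.
  pose N := (Num.Def.truncn (CC / (cc * d))).+1.
  have hN : CC / (cc * d) < N%:R := truncnS_gt _.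
  have hN' : CC < N%:R * (cc * d) by rewrite -ltr_pdivrMr // mulr_gt0.
  have k1 := key N.
  have e1 := expR_ge1Dx (cc * N%:R).
  have e2 : expR (- cc * N%:R) * expR (cc * N%:R) = 1.
    by rewrite -expRD mulNr addNr expR0.
  have F0 := expR_gt0 (cc * N%:R).
  have k2 : d * expR (cc * N%:R) <= CC.
    have h : 0 <= (CC * expR (- cc * N%:R) - d) * expR (cc * N%:R).
      by apply: mulr_ge0; [rewrite subr_ge0|exact: ltW].
    by move: h; rewrite mulrBl -mulrA e2 mulr1 subr_ge0.
  have h : d * (1 + cc * N%:R) <= CC.
    apply: le_trans k2; rewrite ler_pM2l //.
  move: h; rewrite mulrDr mulr1 => h.
  exact: (@arith d CC cc N%:R dpos hN' h).
have ab : a = b by apply/eqP; rewrite -subr_eq0 -normr_eq0 d0.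
by rewrite -(fineK fa) -(fineK fb) -/a -/b ab.
Qed.

End Main.

Theorem corollary3p1 (R : realType) (k : nat)
  (A : Alph k -> 'M[R]_2) (p : Alph k -> R)
  (P : probability (Alph k) R) (eta : probability (P1 R) R) :
  (forall i : Alph k, \rank (A i) = 1%N \/ A i \in unitmx) ->
  (exists i : Alph k, \rank (A i) = 1%N) ->
  (exists i : Alph k, A i \in unitmx) ->
  (forall i : Alph k, 0 < p i) ->
  \sum_(i : Alph k) p i = 1 ->
  (forall i : Alph k, P [set i] = (p i)%:E) ->
  stationary (Qop A p) eta ->
  stationary (Qbar A p) (P \x eta)%E /\
  (exists c C : R, 0 < c /\ 0 <= C /\
     forall (n : nat) (phi : (Alph k * P1 R)%type -> R),
       measurable_fun setT phi ->
       forall M : R, (forall x, `|phi x| <= M) ->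
       forall x, (`| (iter n (Qbar A p) phi x)%:E
                     - \int[(P \x eta)%E]_z (phi z)%:E | <=
                  (C * expR (- c * n%:R) * M)%:E)%E) /\
  (forall nu : probability (Alph k * P1 R)%type R,
     stationary (Qbar A p) nu ->
     forall S, measurable S -> nu S = (P \x eta)%E S).
Proof.
move=> hA hsing hinv hpos p1 hP stat.
split; first exact: (@part1 R k A p P eta hpos p1 hP stat).
split; last exact: (@part3 R k A p P eta hsing hpos p1 hP stat).
exists (@cc R k A p), (@CC R k A p); split; first exact: (@cc_gt0 R k A p hsing hpos p1).
split; first by apply: mulr_ge0 => //; exact: expR_ge0.
move=> n phi mphi M hM x; exact: (@part2 R k A p P eta hsing hpos p1 hP stat n phi mphi M hM x).
Qed.
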